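(* Let $\rho_1,\rho_2:[a,b]\to\mathbb{R}$ be such that each $\rho_i$ is continuous on $[a,b]$ except at the points of a finite set $D_i\subset[a,b]$, at which it has discontinuities of the first kind (the one-sided limits exist and are finite), and assume $D_1\cap D_2=\emptyset$. Let $(\rho_1^\epsilon)$, $(\rho_2^\epsilon)$ be families of functions on $[a,b]$ with $\lim_{\epsilon\to0}\rho_1^\epsilon=\rho_1$ and $\lim_{\epsilon\to0}\rho_2^\epsilon=\rho_2$ on $[a,b]$. Then $\lim_{\epsilon\to0}(\rho_1^\epsilon+\rho_2^\epsilon)=\rho_1+\rho_2$ on $[a,b]$.
   Context: For functions $\rho,\hat\rho:[a,b]\to\mathbb{R}$ and $\Delta>0$, write $\rho\in O(\hat\rho,\Delta)$ on $[a,b]$ iff for every $x\in[a,b]$: $\inf_{y\in[a,b],|y-x|\le\Delta}\hat\rho(y)-\Delta<\rho(x)<\sup_{y\in[a,b],|y-x|\le\Delta}\hat\rho(y)+\Delta$. For a family $(\rho^\epsilon)_{\epsilon>0}$, $\lim_{\epsilon\to0}\rho^\epsilon=\hat\rho$ on $[a,b]$ means: for every $\Delta>0$ there is $\epsilon_0>0$ with $\rho^\epsilon\in O(\hat\rho,\Delta)$ on $[a,b]$ for all $\epsilon\in(0,\epsilon_0)$. *)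

(* Defs.v *)
From Stdlib Require Import Reals List.
Open Scope R_scope.

Definition inI (a b x : R) : Prop := a <= x <= b.

Definition cont_in (a b : R) (rho : R -> R) (x : R) : Prop :=
  forall eps, 0 < eps -> exists delta, 0 < delta /\
    forall y, inI a b y -> Rabs (y - x) < delta -> Rabs (rho y - rho x) < eps.

Definition right_lim (a b : R) (rho : R -> R) (x l : R) : Prop :=
  forall eps, 0 < eps -> exists delta, 0 < delta /\
    forall y, inI a b y -> x < y < x + delta -> Rabs (rho y - l) < eps.

Definition left_lim (a b : R) (rho : R -> R) (x l : R) : Prop :=
  forall eps, 0 < eps -> exists delta, 0 < delta /\
    forall y, inI a b y -> x - delta < y < x -> Rabs (rho y - l) < eps.

Definition first_kind_except (a b : R) (rho : R -> R) (D : list R) : Prop :=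
  (forall d, In d D -> inI a b d) /\
  (forall x, inI a b x -> ~ In x D -> cont_in a b rho x) /\
  (forall d, In d D ->
      ~ cont_in a b rho d /\
      (d < b -> exists l, right_lim a b rho d l) /\
      (a < d -> exists l, left_lim a b rho d l)).

(* rho ∈ O(rhohat, Δ) on [a,b]:
   for every x in [a,b],
     inf_{y∈[a,b],|y-x|<=Δ} rhohat y - Δ < rho x < sup_{y∈[a,b],|y-x|<=Δ} rhohat y + Δ.
   The inf/sup are over a nonempty set (it contains x) and taken in the extended
   reals; "inf S - Δ < r" is literally "some y in S has rhohat y - Δ < r",
   and dually for sup. *)
Definition InO (a b : R) (rho rhohat : R -> R) (Delta : R) : Prop :=
  forall x, inI a b x ->
    (exists y, inI a b y /\ Rabs (y - x) <= Delta /\ rhohat y - Delta < rho x) /\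
    (exists y, inI a b y /\ Rabs (y - x) <= Delta /\ rho x < rhohat y + Delta).

Definition lim_fam (a b : R) (rhoe : R -> R -> R) (rhohat : R -> R) : Prop :=
  forall Delta, 0 < Delta -> exists eps0, 0 < eps0 /\
    forall eps, 0 < eps < eps0 -> InO a b (rhoe eps) rhohat Delta.

(* Main.v *)
Require Import Defs.
From Stdlib Require Import Reals List Lra Classical ClassicalEpsilon.
From Coquelicot Require Import Coquelicot.
Open Scope R_scope.

Definition good (a b : R) (r1 r2 : R -> R) (eta r t : R) : Prop :=
  (forall y z, inI a b y -> inI a b z -> Rabs (y - t) < r -> Rabs (z - t) < r ->
      Rabs (r1 y - r1 z) < eta) \/
  (forall y z, inI a b y -> inI a b z -> Rabs (y - t) < r -> Rabs (z - t) < r ->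
      Rabs (r2 y - r2 z) < eta).

Lemma cont_good (a b : R) (rho : R -> R) (t eta : R) :
  0 < eta -> cont_in a b rho t -> exists r, 0 < r /\
  forall y z, inI a b y -> inI a b z -> Rabs (y - t) < r -> Rabs (z - t) < r ->
      Rabs (rho y - rho z) < eta.
Proof.
  intros He Hc. destruct (Hc (eta/2)) as [r [Hr H]]; [lra|].
  exists r; split; auto. intros y z Hy Hz Hyt Hzt.
  pose proof (H z Hz Hzt) as H'. specialize (H y Hy Hyt).
  replace (rho y - rho z) with ((rho y - rho t) - (rho z - rho t)) by ring.
  eapply Rle_lt_trans; [apply Rabs_triang|]. rewrite Rabs_Ropp. lra.
Qed.

Lemma local_good a b rho1 rho2 D1 D2 eta :
  0 < eta ->
  first_kind_except a b rho1 D1 ->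
  first_kind_except a b rho2 D2 ->
  (forall x, In x D1 -> ~ In x D2) ->
  forall t, exists r, 0 < r /\ (inI a b t -> good a b rho1 rho2 eta r t).
Proof.
  intros He [_ [C1 _]] [_ [C2 _]] Hdis t.
  destruct (classic (inI a b t)) as [Ht|Ht].
  - destruct (classic (In t D1)) as [HD|HD].
    + destruct (cont_good a b rho2 t eta He (C2 t Ht (Hdis t HD))) as [r [Hr H]].
      exists r; split; auto. intros _; right; exact H.
    + destruct (cont_good a b rho1 t eta He (C1 t Ht HD)) as [r [Hr H]].
      exists r; split; auto. intros _; left; exact H.
  - exists 1; split; [lra|]. tauto.
Qed.

Lemma unif_good a b rho1 rho2 D1 D2 eta :
  0 < eta ->
  first_kind_except a b rho1 D1 ->
  first_kind_except a b rho2 D2 ->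
  (forall x, In x D1 -> ~ In x D2) ->
  exists d, 0 < d /\ forall x, inI a b x ->
   (forall y z, inI a b y -> inI a b z -> Rabs (y - x) <= d -> Rabs (z - x) <= d ->
      Rabs (rho1 y - rho1 z) < eta) \/
   (forall y z, inI a b y -> inI a b z -> Rabs (y - x) <= d -> Rabs (z - x) <= d ->
      Rabs (rho2 y - rho2 z) < eta).
Proof.
  intros He F1 F2 Hdis.
  pose proof (local_good a b rho1 rho2 D1 D2 eta He F1 F2 Hdis) as L.
  assert (Hs : forall t, {r : R | 0 < r /\ (inI a b t -> good a b rho1 rho2 eta r t)}).
  { intro t. apply constructive_indefinite_description. apply L. }
  set (delta := fun t => mkposreal (proj1_sig (Hs t) / 2)
        (ltac:(pose proof (proj1 (proj2_sig (Hs t))); lra))).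
  destruct (compactness_value_1d a b delta) as [d Hd].
  exists d; split; [apply cond_pos|].
  intros x Hx. apply NNPP; intro Hn. apply (Hd x Hx). intros [t [Ht [Hxt Hdt]]].
  apply Hn. unfold delta in Hxt, Hdt; simpl in Hxt, Hdt.
  pose proof (proj2_sig (Hs t)) as [Hr Hg]; set (r := proj1_sig (Hs t)) in *.
  assert (Hball : forall y, Rabs (y - x) <= d -> Rabs (y - t) < r).
  { intros y Hy. replace (y - t) with ((y - x) + (x - t)) by ring.
    eapply Rle_lt_trans; [apply Rabs_triang|]. lra. }
  destruct (Hg Ht) as [G|G]; [left|right]; intros y z Hy Hz Hyx Hzx;
    apply G; auto.
Qed.

Theorem mainTheorem14 (a b : R) (rho1 rho2 : R -> R) (D1 D2 : list R)
  (rho1e rho2e : R -> R -> R) :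
  first_kind_except a b rho1 D1 ->
  first_kind_except a b rho2 D2 ->
  (forall x, In x D1 -> ~ In x D2) ->
  lim_fam a b rho1e rho1 ->
  lim_fam a b rho2e rho2 ->
  lim_fam a b (fun eps x => rho1e eps x + rho2e eps x) (fun x => rho1 x + rho2 x).
Proof.
  intros F1 F2 Hdis L1 L2 Delta HD.
  destruct (unif_good a b rho1 rho2 D1 D2 (Delta/4) ltac:(lra) F1 F2 Hdis)
    as [d [Hd U]].
  set (dl := Rmin d (Delta/4)).
  assert (Hdl1 : dl <= d) by apply Rmin_l.
  assert (Hdl2 : dl <= Delta/4) by apply Rmin_r.
  assert (Hdl0 : 0 < dl) by (apply Rmin_pos; lra).
  destruct (L1 dl Hdl0) as [e1 [He1 H1]].
  destruct (L2 dl Hdl0) as [e2 [He2 H2]].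
  exists (Rmin e1 e2); split; [apply Rmin_pos; lra|].
  intros eps Heps x Hx.
  assert (Ha : eps < e1) by (pose proof (Rmin_l e1 e2); lra).
  assert (Hb : eps < e2) by (pose proof (Rmin_r e1 e2); lra).
  destruct (H1 eps ltac:(lra) x Hx) as [[y1 [Hy1 [Hy1x Ly1]]] [u1 [Hu1 [Hu1x Lu1]]]].
  destruct (H2 eps ltac:(lra) x Hx) as [[y2 [Hy2 [Hy2x Ly2]]] [u2 [Hu2 [Hu2x Lu2]]]].
  destruct (U x Hx) as [G|G].
  - pose proof (G y2 y1 Hy2 Hy1 ltac:(lra) ltac:(lra)) as HA.
    pose proof (G u2 u1 Hu2 Hu1 ltac:(lra) ltac:(lra)) as HB.
    apply Rabs_def2 in HA; apply Rabs_def2 in HB.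
    destruct HA, HB.
    split; [exists y2; split; [assumption|]; split; lra | exists u2; split; [assumption|]; split; lra].
  - pose proof (G y1 y2 Hy1 Hy2 ltac:(lra) ltac:(lra)) as HA.
    pose proof (G u1 u2 Hu1 Hu2 ltac:(lra) ltac:(lra)) as HB.
    apply Rabs_def2 in HA; apply Rabs_def2 in HB.
    destruct HA, HB.
    split; [exists y1; split; [assumption|]; split; lra | exists u1; split; [assumption|]; split; lra].
Qed.
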